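(* $\Sigma=\bigcup_{n\ge0}(\mathcal S_n\cup\mathcal S'_n)=\mathcal S\cap\mathcal R^4$, where $\mathcal S$ is the unit sphere of $\mathbb{R}^4$.
   Context: Let $\tau=(1+\sqrt5)/2$, $\tau'=(1-\sqrt5)/2$, and $\mathcal R=\mathbb{Z}[\frac12,\tau]=\{(a+b\tau)/2^n: a,b\in\mathbb{Z},\ n\ge0\}$. Let $\Delta\subset\mathbb{R}^4$ be the set of 120 vectors consisting of: the 8 vectors obtained from $(\pm1,0,0,0)$ by permuting coordinates; the 16 vectors $\frac12(\pm1,\pm1,\pm1,\pm1)$; and the 96 vectors obtained from $\frac12(0,\pm1,\pm\tau',\pm\tau)$ (all sign choices) by even permutations of the coordinates. Let $\Delta'$ be the image of $\Delta$ under the Galois conjugation $\tau\leftrightarrow\tau'$ applied to each coordinate. For a unit vector $a$, $r_a(x)=x-2(x\cdot a)a$. Let $H^\infty$ be the group generated by all $r_a$, $a\in\Delta\cup\Delta'$, and $\Sigma=\{w(a): w\in H^\infty,\ a\in\Delta\cup\Delta'\}$. Let $\mathbb F_4=\mathbb{Z}[\tau]/2\mathbb{Z}[\tau]$, $\bar y$ the coordinatewise reduction of $y\in\mathbb{Z}[\tau]^4$, $A\subset\mathbb F_4^4$ the span of $(\bar1,\bar1,\bar1,\bar1)$ and $(\bar0,\bar1,\bar{\tau'},\bar\tau)$, $A'$ the span of $(\bar1,\bar1,\bar1,\bar1)$ and $(\bar0,\bar1,\bar\tau,\bar{\tau'})$. For $n\ge1$, $\mathcal S_n=\{x\in2^{-n}\mathbb{Z}[\tau]^4: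 x\cdot x=1,\ \overline{2^nx}\in A\setminus\{0\}\}$, $\mathcal S'_n$ likewise with $A'$; and $\mathcal S_0=\mathcal S'_0$ is the set of 8 vectors obtained from $(\pm1,0,0,0)$ by permuting coordinates. *)

(* Defs.v *)
From Stdlib Require Import Reals List Permutation.
Import ListNotations.
Open Scope R_scope.

Definition tau : R := (1 + sqrt 5) / 2.
Definition tau' : R := (1 - sqrt 5) / 2.

Record V4 := mkV { c0 : R; c1 : R; c2 : R; c3 : R }.

Definition dot (x y : V4) : R :=
  c0 x * c0 y + c1 x * c1 y + c2 x * c2 y + c3 x * c3 y.
Definition vadd (x y : V4) : V4 :=
  mkV (c0 x + c0 y) (c1 x + c1 y) (c2 x + c2 y) (c3 x + c3 y).
Definition vscale (k : R) (x : V4) : V4 :=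
  mkV (k * c0 x) (k * c1 x) (k * c2 x) (k * c3 x).
Definition vsub (x y : V4) : V4 := vadd x (vscale (-1) y).
Definition coords (x : V4) : list R := [c0 x; c1 x; c2 x; c3 x].
Definition vec_of (l : list R) : V4 :=
  mkV (nth 0 l 0) (nth 1 l 0) (nth 2 l 0) (nth 3 l 0).

Definition refl (a x : V4) : V4 := vsub x (vscale (2 * dot x a) a).

Definition is_sign (s : R) : Prop := s = 1 \/ s = -1.

Definition even_perms : list (list nat) :=
  [[0;1;2;3]%nat; [0;2;3;1]%nat; [0;3;1;2]%nat; [1;0;3;2]%nat;
   [1;2;0;3]%nat; [1;3;2;0]%nat; [2;0;1;3]%nat; [2;1;3;0]%nat;
   [2;3;0;1]%nat; [3;0;2;1]%nat; [3;1;0;2]%nat; [3;2;1;0]%nat].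

Definition permute (p : list nat) (base : list R) : V4 :=
  vec_of (map (fun k => nth k base 0) p).

Definition in_Delta (x : V4) : Prop :=
  (exists s l, is_sign s /\ Permutation l [s; 0; 0; 0] /\ x = vec_of l)
  \/
  (exists s0 s1 s2 s3, is_sign s0 /\ is_sign s1 /\ is_sign s2 /\ is_sign s3 /\
     x = mkV (s0 / 2) (s1 / 2) (s2 / 2) (s3 / 2))
  \/
  (exists p s1 s2 s3, In p even_perms /\ is_sign s1 /\ is_sign s2 /\ is_sign s3 /\
     x = permute p [0; s1 / 2; s2 * tau' / 2; s3 * tau / 2]).

Definition in_Rring (y : R) : Prop :=
  exists (a b : Z) (n : nat), y = (IZR a + IZR b * tau) / 2 ^ n.

(* Galois conjugation tau <-> tau' on Z[1/2,tau], as a relation y |-> z *)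
Definition galconj (y z : R) : Prop :=
  exists (a b : Z) (n : nat),
    y = (IZR a + IZR b * tau) / 2 ^ n /\ z = (IZR a + IZR b * tau') / 2 ^ n.

Definition in_Delta' (z : V4) : Prop :=
  exists x, in_Delta x /\
    galconj (c0 x) (c0 z) /\ galconj (c1 x) (c1 z) /\
    galconj (c2 x) (c2 z) /\ galconj (c3 x) (c3 z).

Definition in_gen (a : V4) : Prop := in_Delta a \/ in_Delta' a.

(* Since every r_a is an involution, the generated group is the closure of
   the identity under left composition with generators. *)
Inductive in_Hinf : (V4 -> V4) -> Prop :=
  | Hinf_id : in_Hinf (fun x => x)
  | Hinf_step : forall a w, in_gen a -> in_Hinf w -> in_Hinf (fun x => refl a (w x)).

Definition in_Sigma (x : V4) : Prop :=
  exists w a, in_Hinf w /\ in_gen a /\ x = w a.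

Definition in_Ztau (y : R) : Prop := exists a b : Z, y = IZR a + IZR b * tau.
Definition in_Ztau4 (y : V4) : Prop := Forall in_Ztau (coords y).
(* y in 2 Z[tau], i.e. reduction of y in F_4 = Z[tau]/2Z[tau] is 0 *)
Definition red_zero (y : R) : Prop := exists a b : Z, y = 2 * (IZR a + IZR b * tau).

Definition ones : V4 := mkV 1 1 1 1.
Definition vA : V4 := mkV 0 1 tau' tau.    (* A  = span(1111, (0,1,tau',tau)) *)
Definition vA' : V4 := mkV 0 1 tau tau'.   (* A' = span(1111, (0,1,tau,tau')) *)

(* For y in Z[tau]^4: reduction of y mod 2 lies in the F_4-span of the
   reductions of u and v, i.e. ybar = cbar1 ubar + cbar2 vbar for some
   c1, c2 in Z[tau] (every element of F_4 lifts to Z[tau]). *)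
Definition red_in_span (u v y : V4) : Prop :=
  exists k1 k2, in_Ztau k1 /\ in_Ztau k2 /\
    Forall red_zero (coords (vsub y (vadd (vscale k1 u) (vscale k2 v)))).
Definition red_nonzero (y : V4) : Prop := ~ Forall red_zero (coords y).

Definition in_S0 (x : V4) : Prop :=
  exists s l, is_sign s /\ Permutation l [s; 0; 0; 0] /\ x = vec_of l.

Definition in_Sn_gen (v : V4) (n : nat) (x : V4) : Prop :=
  match n with
  | O => in_S0 x
  | S _ => let y := vscale (2 ^ n) x in
           in_Ztau4 y /\ dot x x = 1 /\ red_in_span ones v y /\ red_nonzero y
  end.
Definition in_Sn := in_Sn_gen vA.
Definition in_Sn' := in_Sn_gen vA'.

(* Main.v *)
Require Import Defs.
From Stdlib Require Import Reals List Permutation ZArith Lia Lra Psatz Bool.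
Import ListNotations.
Import Defs.
Open Scope R_scope.

Open Scope R_scope.

Lemma sqrt5_sq : sqrt 5 * sqrt 5 = 5.
Proof. apply sqrt_sqrt; lra. Qed.

Lemma tau_sq : tau * tau = tau + 1.
Proof. unfold tau. pose proof sqrt5_sq. nra. Qed.

Lemma tau'_eq : tau' = 1 - tau.
Proof. unfold tau, tau'. lra. Qed.

Lemma tau'_sq : tau' * tau' = tau' + 1.
Proof. unfold tau'. pose proof sqrt5_sq. nra. Qed.

Lemma sq5_Z : forall n : nat, forall p q : Z, (Z.abs_nat q <= n)%nat -> (p * p = 5 * (q * q))%Z -> q = 0%Z.
Proof.
  induction n as [|n IH]; intros p q Hn H.
  - lia.
  - assert (Hp : (p mod 5 = 0)%Z).
    { assert (E: ((p*p) mod 5 = 0)%Z) by (rewrite H, Z.mul_comm; apply Z.mod_mul; lia).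
      rewrite Z.mul_mod in E by lia.
      assert (0 <= p mod 5 < 5)%Z by (apply Z.mod_pos_bound; lia).
      assert (p mod 5 = 0 \/ p mod 5 = 1 \/ p mod 5 = 2 \/ p mod 5 = 3 \/ p mod 5 = 4)%Z as C by lia.
      destruct C as [C|[C|[C|[C|C]]]]; rewrite C in E; simpl in E; try lia; discriminate. }
    apply Z.mod_divide in Hp; [|lia]. destruct Hp as [k Hk]. subst p.
    assert (H2 : (q * q = 5 * (k * k))%Z) by lia.
    assert (Hq : (q mod 5 = 0)%Z).
    { assert (E: ((q*q) mod 5 = 0)%Z) by (rewrite H2, Z.mul_comm; apply Z.mod_mul; lia).
      rewrite Z.mul_mod in E by lia.
      assert (0 <= q mod 5 < 5)%Z by (apply Z.mod_pos_bound; lia).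
      assert (q mod 5 = 0 \/ q mod 5 = 1 \/ q mod 5 = 2 \/ q mod 5 = 3 \/ q mod 5 = 4)%Z as C by lia.
      destruct C as [C|[C|[C|[C|C]]]]; rewrite C in E; simpl in E; try lia; discriminate. }
    apply Z.mod_divide in Hq; [|lia]. destruct Hq as [m Hm]. subst q.
    assert (Hm0 : m = 0%Z).
    { apply (IH k m); [|lia]. destruct (Z.eq_dec m 0); [subst; simpl; lia|]. lia. }
    subst; lia.
Qed.

Lemma irr : forall a b : Z, IZR a + IZR b * tau = 0 -> a = 0%Z /\ b = 0%Z.
Proof.
  intros a b H.
  assert (Hb : b = 0%Z).
  { destruct (Z.eq_dec b 0) as [|nb]; [auto|exfalso].
    assert (E : IZR b * sqrt 5 = - (2 * IZR a + IZR b)) by (unfold tau in H; lra).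
    assert (E2 : (IZR b * sqrt 5) * (IZR b * sqrt 5) = (2 * IZR a + IZR b) * (2 * IZR a + IZR b)) by (rewrite E; ring).
    replace ((IZR b * sqrt 5) * (IZR b * sqrt 5)) with (IZR b * IZR b * (sqrt 5 * sqrt 5)) in E2 by ring.
    rewrite sqrt5_sq in E2.
    assert (EZ : ((2*a+b)*(2*a+b) = 5 * (b*b))%Z).
    { apply eq_IZR. rewrite !mult_IZR, !plus_IZR, !mult_IZR. simpl. lra. }
    apply nb. apply (sq5_Z (Z.abs_nat b) (2*a+b) b); auto. }
  subst b. split; auto. apply eq_IZR. simpl in *. lra.
Qed.

Open Scope Z_scope.
Definition zt := (Z*Z)%type.
Definition zadd (p q:zt) : zt := (fst p + fst q, snd p + snd q).
Definition zsub (p q:zt) : zt := (fst p - fst q, snd p - snd q).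
Definition zmul (p q:zt) : zt := (fst p * fst q + snd p * snd q, fst p * snd q + snd p * fst q + snd p * snd q).
Definition zsc (k:Z) (p:zt) : zt := (k * fst p, k * snd p).
Record ZV := mkZ {w0:zt; w1:zt; w2:zt; w3:zt}.
Definition zdot (Y U:ZV) : zt := zadd (zadd (zadd (zmul (w0 Y) (w0 U)) (zmul (w1 Y) (w1 U))) (zmul (w2 Y) (w2 U))) (zmul (w3 Y) (w3 U)).
Definition zmap (f:zt->zt) (Y:ZV) : ZV := mkZ (f (w0 Y)) (f (w1 Y)) (f (w2 Y)) (f (w3 Y)).
Definition zmap2 (f:zt->zt->zt) (Y U:ZV) : ZV := mkZ (f (w0 Y) (w0 U)) (f (w1 Y) (w1 U)) (f (w2 Y) (w2 U)) (f (w3 Y) (w3 U)).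
Definition dvz (m:Z) (p:zt) : bool := if (fst p mod m =? 0) then (snd p mod m =? 0) else false.
Definition dvv (m:Z) (Y:ZV) : bool := if dvz m (w0 Y) then if dvz m (w1 Y) then if dvz m (w2 Y) then dvz m (w3 Y) else false else false else false.
Definition rcomb (Y U:ZV) : ZV := let s := zdot Y U in zmap2 (fun y u => zsub (zsc 2 y) (zmul s u)) Y U.
Definition red4 (Y U:ZV) : bool := dvv 4 (rcomb Y U).
Definition zhalf (p:zt) : zt := (fst p / 2, snd p / 2).
Definition pres (Y U:ZV) : ZV := let t := zhalf (zdot Y U) in zmap2 (fun y u => zsub y (zmul t u)) Y U.
Definition signs := [1;-1].
Definition permZ (p:list nat) (b:list zt) : ZV :=
  mkZ (nth (nth 0 p 0%nat) b (0,0)) (nth (nth 1 p 0%nat) b (0,0)) (nth (nth 2 p 0%nat) b (0,0)) (nth (nth 3 p 0%nat) b (0,0)).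
Definition candA : list ZV := flat_map (fun s0 => flat_map (fun s1 => flat_map (fun s2 => map (fun s3 =>
   mkZ (s0,0) (s1,0) (s2,0) (s3,0)) signs) signs) signs) signs.
Definition baseB (s1 s2 s3:Z) : list zt := [(0,0);(s1,0);(s2,-s2);(0,s3)].
Definition baseC (s1 s2 s3:Z) : list zt := [(0,0);(s1,0);(0,s2);(s3,-s3)].
Definition candB : list ZV := flat_map (fun p => flat_map (fun s1 => flat_map (fun s2 => map (fun s3 =>
   permZ p (baseB s1 s2 s3)) signs) signs) signs) even_perms.
Definition candC : list ZV := flat_map (fun p => flat_map (fun s1 => flat_map (fun s2 => map (fun s3 =>
   permZ p (baseC s1 s2 s3)) signs) signs) signs) even_perms.
Definition cands := candA ++ candB ++ candC.
Fixpoint exb {A} (f:A->bool) (l:list A) : bool := match l with [] => false | a::l => if f a then true else exb f l end.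
Definition candR : list ZV := [
mkZ (0,0) (1,0) (1,-1) (0,1);
mkZ (0,0) (1,0) (0,1) (1,-1);
mkZ (0,0) (1,0) (1,-1) (0,-1);
mkZ (0,0) (1,0) (0,1) (-1,1);
mkZ (0,0) (1,0) (-1,1) (0,1);
mkZ (0,0) (1,0) (0,-1) (1,-1);
mkZ (0,0) (1,0) (-1,1) (0,-1);
mkZ (0,0) (1,0) (0,-1) (-1,1);
mkZ (1,0) (0,0) (0,1) (1,-1);
mkZ (1,0) (0,0) (1,-1) (0,1);
mkZ (1,0) (0,0) (0,-1) (1,-1);
mkZ (1,0) (0,0) (-1,1) (0,1);
mkZ (1,0) (0,0) (0,1) (-1,1);
mkZ (1,0) (0,0) (1,-1) (0,-1);
mkZ (1,0) (0,0) (0,-1) (-1,1);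
mkZ (1,0) (0,0) (-1,1) (0,-1);
mkZ (1,0) (1,-1) (0,0) (0,1);
mkZ (1,0) (0,1) (0,0) (1,-1);
mkZ (1,0) (1,-1) (0,0) (0,-1);
mkZ (1,0) (0,1) (0,0) (-1,1);
mkZ (1,0) (-1,1) (0,0) (0,1);
mkZ (1,0) (0,-1) (0,0) (1,-1);
mkZ (1,0) (-1,1) (0,0) (0,-1);
mkZ (1,0) (0,-1) (0,0) (-1,1);
mkZ (1,0) (0,1) (1,-1) (0,0);
mkZ (1,0) (1,-1) (0,1) (0,0);
mkZ (1,0) (0,-1) (1,-1) (0,0);
mkZ (1,0) (-1,1) (0,1) (0,0);
mkZ (1,0) (0,1) (-1,1) (0,0);
mkZ (1,0) (1,-1) (0,-1) (0,0);
mkZ (1,0) (0,-1) (-1,1) (0,0);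
mkZ (1,0) (-1,1) (0,-1) (0,0);
mkZ (1,0) (1,0) (1,0) (1,0);
mkZ (1,0) (1,0) (1,0) (-1,0)
].
Definition candP : list ZV := [mkZ (0,0) (1,0) (1,-1) (0,1); mkZ (0,0) (1,0) (1,-1) (0,-1)].
Definition evenv (Y:ZV) : bool := dvv 2 Y.
Definition good4 (Y:ZV) : bool := if evenv Y then true else exb (red4 Y) candR.
Definition norm8 (Y:ZV) : bool := let n := zdot Y Y in if (fst n mod 4 =? 0) then (snd n mod 8 =? 0) else false.
Definition norm16 (Y:ZV) : bool := let n := zdot Y Y in if ((fst n mod 16 =? 0) || (fst n mod 16 =? 4)) then (snd n mod 16 =? 0) else false.
Definition zmodv (m:Z) (Y:ZV) : ZV := zmap (fun p => (fst p mod m, snd p mod m)) Y.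
Definition step2 (Z:ZV) : bool := exb (fun U => if dvz 2 (zdot Z U) then good4 (zmodv 4 (pres Z U)) else false) candP.
Definition allv (l:list Z) (f:ZV -> bool) : bool :=
  forallb (fun a0 => forallb (fun b0 => forallb (fun a1 => forallb (fun b1 =>
  forallb (fun a2 => forallb (fun b2 => forallb (fun a3 => forallb (fun b3 =>
   f (mkZ (a0,b0) (a1,b1) (a2,b2) (a3,b3))) l) l) l) l) l) l) l) l.
Definition lift (Y L:ZV) : ZV := zmap2 (fun y l => zadd y (zsc 4 l)) Y L.
Definition chk1 (Y:ZV) : bool :=
  if evenv Y then true else if norm8 Y then
  (if exb (red4 Y) candR then true else
  allv [0;1] (fun L => let Z := lift Y L in if norm16 Z then step2 Z else true)) else true.

Definition wA : ZV := mkZ (0,0) (1,0) (1,-1) (0,1).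
Definition wA' : ZV := mkZ (0,0) (1,0) (0,1) (1,-1).
Definition spanok (P:ZV) (c : zt * zt * bool) : bool :=
  let '(k1,k2,b) := c in evenv (zmap2 (fun y w => zsub (zsub y k1) (zmul k2 w)) P (if b then wA else wA')).
Definition ks : list zt := [(0,0);(1,0);(0,1);(1,1)].
Definition spancands : list (zt*zt*bool) :=
  flat_map (fun k1 => flat_map (fun k2 => [(k1,k2,true);(k1,k2,false)]) ks) ks.
Definition norm4 (Y:ZV) : bool := let n := zdot Y Y in if (fst n mod 4 =? 0) then (snd n mod 4 =? 0) else false.
Definition chk2 (P:ZV) : bool := if evenv P then true else if norm4 P then exb (spanok P) spancands else true.
Definition zveqb (U V : ZV) : bool :=
  let e p q := ((fst p =? fst q) && (snd p =? snd q)) in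
  e (w0 U) (w0 V) && e (w1 U) (w1 V) && e (w2 U) (w2 V) && e (w3 U) (w3 V).
Lemma chk2_ok : allv [0;1] chk2 = true.
Proof. vm_compute. reflexivity. Qed.
Lemma candRP_ok : forallb (fun u => existsb (zveqb u) cands) (candR ++ candP) = true.
Proof. vm_compute. reflexivity. Qed.
Lemma chk1_ok : allv [0;1;2;3] chk1 = true.
Proof. vm_compute. reflexivity. Qed.

Open Scope R_scope.

Definition ev (p:zt) : R := IZR (fst p) + IZR (snd p) * tau.
Definition evV (Y:ZV) (N:nat) : V4 := mkV (ev (w0 Y) / 2^N) (ev (w1 Y) / 2^N) (ev (w2 Y) / 2^N) (ev (w3 Y) / 2^N).

Lemma tau_mul : forall x y z w, (x + y*tau)*(z+w*tau) = (x*z + y*w) + (x*w + y*z + y*w)*tau.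
Proof. intros. replace ((x + y*tau)*(z+w*tau)) with (x*z + (x*w+y*z)*tau + y*w*(tau*tau)) by ring.
  rewrite tau_sq. ring. Qed.
Lemma tau'_mul : forall x y z w, (x + y*tau')*(z+w*tau') = (x*z + y*w) + (x*w + y*z + y*w)*tau'.
Proof. intros. replace ((x + y*tau')*(z+w*tau')) with (x*z + (x*w+y*z)*tau' + y*w*(tau'*tau')) by ring.
  rewrite tau'_sq. ring. Qed.

Lemma ev_add p q : ev (zadd p q) = ev p + ev q.
Proof. unfold ev, zadd; simpl. rewrite !plus_IZR. ring. Qed.
Lemma ev_sub p q : ev (zsub p q) = ev p - ev q.
Proof. unfold ev, zsub; simpl. rewrite !minus_IZR. ring. Qed.
Lemma ev_mul p q : ev (zmul p q) = ev p * ev q.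
Proof. unfold ev, zmul; simpl. rewrite tau_mul. rewrite !plus_IZR, !mult_IZR. ring. Qed.
Lemma ev_sc k p : ev (zsc k p) = IZR k * ev p.
Proof. unfold ev, zsc; simpl. rewrite !mult_IZR. ring. Qed.
Lemma ev_inj p q : ev p = ev q -> p = q.
Proof. intros H. destruct p as [a b], q as [c d]. unfold ev in H; simpl in H.
  destruct (irr (a - c) (b - d)) as [H1 H2]. rewrite !minus_IZR. lra.
  f_equal; lia. Qed.

Lemma V4eq : forall x y : V4, c0 x = c0 y -> c1 x = c1 y -> c2 x = c2 y -> c3 x = c3 y -> x = y.
Proof. intros [] []; simpl; intros; subst; reflexivity. Qed.

Fixpoint zp (n:nat) : Z := match n with O => 1%Z | S n => (2 * zp n)%Z end.
Lemma zp_IZR n : IZR (zp n) = 2 ^ n.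
Proof. induction n; [reflexivity|]. change (zp (S n)) with (2 * zp n)%Z. rewrite mult_IZR, IHn. simpl. reflexivity. Qed.
Lemma pow2_pos n : 0 < 2 ^ n.
Proof. apply pow_lt; lra. Qed.
Lemma pow2_nz n : 2 ^ n <> 0.
Proof. pose proof (pow2_pos n); lra. Qed.

Lemma dot_evV Y N : dot (evV Y N) (evV Y N) = ev (zdot Y Y) / (2^N * 2^N).
Proof. unfold dot, evV, zdot; simpl. rewrite !ev_add, !ev_mul. field. apply pow2_nz. Qed.

Lemma norm_int Y N : dot (evV Y N) (evV Y N) = 1 -> zdot Y Y = (zp N * zp N, 0)%Z.
Proof. intros H. rewrite dot_evV in H. apply ev_inj. unfold ev at 2; simpl.
  rewrite mult_IZR, zp_IZR. pose proof (pow2_nz N).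
  assert (E : ev (zdot Y Y) = 1 * (2^N*2^N)) by (rewrite <- H; field; auto).
  rewrite E. ring. Qed.

Lemma evV_half Q n : evV (zmap (zsc 2) Q) (S n) = evV Q n.
Proof. unfold evV, zmap; apply V4eq; simpl; rewrite ev_sc; simpl; field; apply pow2_nz. Qed.

Lemma dot_evV2 Y U N : dot (evV Y N) (evV U 1) = ev (zdot Y U) / (2^N * 2).
Proof. unfold dot, evV, zdot; simpl. rewrite !ev_add, !ev_mul. field. apply pow2_nz. Qed.

Lemma refl_ev U Y N : refl (evV U 1) (evV Y N) = evV (rcomb Y U) (S N).
Proof. unfold refl, vsub, vadd, vscale. rewrite dot_evV2.
  unfold rcomb, zmap2, evV; apply V4eq; simpl; rewrite ev_sub, ev_sc, ev_mul; simpl; field; apply pow2_nz. Qed.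

Open Scope Z_scope.

Definition congz (m:Z) (p q:zt) : Prop := (m | fst p - fst q) /\ (m | snd p - snd q).
Definition congv (m:Z) (Y Y':ZV) : Prop :=
  congz m (w0 Y) (w0 Y') /\ congz m (w1 Y) (w1 Y') /\ congz m (w2 Y) (w2 Y') /\ congz m (w3 Y) (w3 Y').

Lemma dv_lin : forall m a b c d, (m | a - b) -> (m | c - d) -> forall x y, (m | (x*a + y*c) - (x*b + y*d)).
Proof. intros m a b c d [k1 H1] [k2 H2] x y. exists (x*k1 + y*k2). nia. Qed.

Lemma congz_refl m p : congz m p p.
Proof. split; replace (_ - _) with 0 by ring; apply Z.divide_0_r. Qed.
Lemma congz_add m p q p' q' : congz m p p' -> congz m q q' -> congz m (zadd p q) (zadd p' q').
Proof. intros [A1 A2] [B1 B2]; split; simpl.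
  - replace (fst p + fst q - (fst p' + fst q')) with ((fst p - fst p') + (fst q - fst q')) by ring. apply Z.divide_add_r; auto.
  - replace (snd p + snd q - (snd p' + snd q')) with ((snd p - snd p') + (snd q - snd q')) by ring. apply Z.divide_add_r; auto. Qed.
Lemma congz_sub m p q p' q' : congz m p p' -> congz m q q' -> congz m (zsub p q) (zsub p' q').
Proof. intros [A1 A2] [B1 B2]; split; simpl.
  - replace (fst p - fst q - (fst p' - fst q')) with ((fst p - fst p') - (fst q - fst q')) by ring. apply Z.divide_sub_r; auto.
  - replace (snd p - snd q - (snd p' - snd q')) with ((snd p - snd p') - (snd q - snd q')) by ring. apply Z.divide_sub_r; auto. Qed.
Lemma dv_mul m a b c d : (m | a - b) -> (m | c - d) -> (m | a*c - b*d).
Proof. intros H1 H2. replace (a*c - b*d) with (a*(c-d) + d*(a-b)) by ring.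
  apply Z.divide_add_r; apply Z.divide_mul_r; auto. Qed.
Lemma congz_mul m p q p' q' : congz m p p' -> congz m q q' -> congz m (zmul p q) (zmul p' q').
Proof. intros [A1 A2] [B1 B2]; split; simpl.
  - replace (fst p * fst q + snd p * snd q - (fst p' * fst q' + snd p' * snd q'))
      with ((fst p * fst q - fst p' * fst q') + (snd p * snd q - snd p' * snd q')) by ring.
    apply Z.divide_add_r; apply dv_mul; auto.
  - replace (fst p * snd q + snd p * fst q + snd p * snd q - (fst p' * snd q' + snd p' * fst q' + snd p' * snd q'))
      with ((fst p * snd q - fst p' * snd q') + (snd p * fst q - snd p' * fst q') + (snd p * snd q - snd p' * snd q')) by ring.
    apply Z.divide_add_r; [apply Z.divide_add_r|]; apply dv_mul; auto. Qed.
Lemma congz_sc m k p p' : congz m p p' -> congz m (zsc k p) (zsc k p').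
Proof. intros [A1 A2]; split; simpl.
  - replace (k * fst p - k * fst p') with (k * (fst p - fst p')) by ring. apply Z.divide_mul_r; auto.
  - replace (k * snd p - k * snd p') with (k * (snd p - snd p')) by ring. apply Z.divide_mul_r; auto. Qed.
Lemma congz_weak m d p q : (d | m) -> congz m p q -> congz d p q.
Proof. intros H [A1 A2]; split; eapply Z.divide_trans; eauto. Qed.
Lemma congv_weak m d Y Y' : (d | m) -> congv m Y Y' -> congv d Y Y'.
Proof. intros H (A&B&C&D); repeat split; try (eapply congz_weak; eauto); eapply congz_weak; eauto. Qed.
Lemma congv_refl m Y : congv m Y Y.
Proof. repeat split; apply congz_refl. Qed.

Lemma zdot_cong m Y Y' U U' : congv m Y Y' -> congv m U U' -> congz m (zdot Y U) (zdot Y' U').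
Proof. intros (A1&A2&A3&A4) (B1&B2&B3&B4). unfold zdot.
  repeat apply congz_add; apply congz_mul; auto. Qed.

Lemma dvz_spec m p : m <> 0 -> (dvz m p = true <-> ((m | fst p) /\ (m | snd p))).
Proof. intros Hm. unfold dvz. rewrite <- !Z.mod_divide by auto.
  destruct (fst p mod m =? 0) eqn:E1; destruct (snd p mod m =? 0) eqn:E2;
  rewrite ?Z.eqb_eq, ?Z.eqb_neq in *; split; intros; try tauto; try discriminate; destruct H; tauto. Qed.

Lemma dvz_cong m p q : m <> 0 -> congz m p q -> dvz m p = dvz m q.
Proof. intros Hm [A1 A2]. apply eq_true_iff_eq. rewrite !dvz_spec by auto.
  split; intros [H1 H2]; split.
  - replace (fst q) with (fst p - (fst p - fst q)) by ring. apply Z.divide_sub_r; auto.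
  - replace (snd q) with (snd p - (snd p - snd q)) by ring. apply Z.divide_sub_r; auto.
  - replace (fst p) with (fst q + (fst p - fst q)) by ring. apply Z.divide_add_r; auto.
  - replace (snd p) with (snd q + (snd p - snd q)) by ring. apply Z.divide_add_r; auto. Qed.

Lemma dvv_cong m Y Y' : m <> 0 -> congv m Y Y' -> dvv m Y = dvv m Y'.
Proof. intros Hm (A1&A2&A3&A4). unfold dvv. rewrite (dvz_cong m _ _ Hm A1), (dvz_cong m _ _ Hm A2),
  (dvz_cong m _ _ Hm A3), (dvz_cong m _ _ Hm A4). reflexivity. Qed.

Lemma rcomb_cong m Y Y' U : congv m Y Y' -> congv m (rcomb Y U) (rcomb Y' U).
Proof. intros HY. pose proof (zdot_cong m Y Y' U U HY (congv_refl m U)) as HD.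
  destruct HY as (A1&A2&A3&A4). unfold rcomb, zmap2; simpl.
  repeat split; try apply congz_sub; try apply congz_sc; try apply congz_mul; auto; try apply congz_refl;
  destruct A1, A2, A3, A4; auto. Qed.

Lemma red4_cong Y Y' U : congv 4 Y Y' -> red4 Y U = red4 Y' U.
Proof. intros H. unfold red4. apply dvv_cong; [lia|]. apply rcomb_cong; auto. Qed.
Lemma evenv_cong Y Y' : congv 2 Y Y' -> evenv Y = evenv Y'.
Proof. intros H. unfold evenv. apply dvv_cong; auto; lia. Qed.
Lemma exb_ext {A} (f g : A -> bool) l : (forall x, f x = g x) -> exb f l = exb g l.
Proof. intros H; induction l; simpl; auto. rewrite H, IHl; auto. Qed.
Lemma good4_cong Y Y' : congv 4 Y Y' -> good4 Y = good4 Y'.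
Proof. intros H. unfold good4. rewrite (evenv_cong Y Y').
  rewrite (exb_ext (red4 Y) (red4 Y')); auto. intros; apply red4_cong; auto.
  eapply congv_weak; eauto. exists 2; reflexivity. Qed.

Lemma mod_cong m a : m <> 0 -> (m | a - a mod m).
Proof. intros Hm. exists (a / m). rewrite (Z.div_mod a m) at 1 by auto. ring. Qed.
Lemma zmodv_cong m Y : m <> 0 -> congv m Y (zmodv m Y).
Proof. intros Hm. destruct Y as [[] [] [] []]; unfold zmodv, zmap; simpl; repeat split; simpl; apply mod_cong; auto. Qed.

Lemma exb_spec {A} (f : A -> bool) l : exb f l = true -> exists x, In x l /\ f x = true.
Proof. induction l; simpl; [discriminate|]. destruct (f a) eqn:E; intros H; eauto.
  destruct (IHl H) as (x&?&?); eauto. Qed.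

Lemma in_l4 z : 0 <= z < 4 -> In z [0;1;2;3].
Proof. intros H. assert (z = 0 \/ z = 1 \/ z = 2 \/ z = 3) as [->|[->|[->| ->]]] by lia; simpl; tauto. Qed.
Lemma in_l2 z : 0 <= z < 2 -> In z [0;1].
Proof. intros H. assert (z = 0 \/ z = 1) as [->| ->] by lia; simpl; tauto. Qed.

Lemma allv_spec l f Y : allv l f = true ->
  In (fst (w0 Y)) l -> In (snd (w0 Y)) l -> In (fst (w1 Y)) l -> In (snd (w1 Y)) l ->
  In (fst (w2 Y)) l -> In (snd (w2 Y)) l -> In (fst (w3 Y)) l -> In (snd (w3 Y)) l -> f Y = true.
Proof. destruct Y as [[a0 b0] [a1 b1] [a2 b2] [a3 b3]]; simpl. unfold allv. intros H.
  intros I0 I1 I2 I3 I4 I5 I6 I7.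
  rewrite forallb_forall in H; specialize (H _ I0).
  rewrite forallb_forall in H; specialize (H _ I1).
  rewrite forallb_forall in H; specialize (H _ I2).
  rewrite forallb_forall in H; specialize (H _ I3).
  rewrite forallb_forall in H; specialize (H _ I4).
  rewrite forallb_forall in H; specialize (H _ I5).
  rewrite forallb_forall in H; specialize (H _ I6).
  rewrite forallb_forall in H; specialize (H _ I7). exact H. Qed.

Lemma dot_sq_cong k Y Y' : congv (2*k) Y Y' -> congz (4*k) (zdot Y Y) (zdot Y' Y').
Proof. destruct Y as [[a0 b0] [a1 b1] [a2 b2] [a3 b3]], Y' as [[c0 d0] [c1 d1] [c2 d2] [c3 d3]].
  unfold congv, congz; cbn [fst snd w0 w1 w2 w3].
  intros ([[q0 H0] [r0 G0]] & [[q1 H1] [r1 G1]] & [[q2 H2] [r2 G2]] & [[q3 H3] [r3 G3]]).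
  assert (a0 = c0 + q0*(2*k)) by (rewrite <- H0; ring). assert (a1 = c1 + q1*(2*k)) by (rewrite <- H1; ring).
  assert (a2 = c2 + q2*(2*k)) by (rewrite <- H2; ring). assert (a3 = c3 + q3*(2*k)) by (rewrite <- H3; ring).
  assert (b0 = d0 + r0*(2*k)) by (rewrite <- G0; ring). assert (b1 = d1 + r1*(2*k)) by (rewrite <- G1; ring).
  assert (b2 = d2 + r2*(2*k)) by (rewrite <- G2; ring). assert (b3 = d3 + r3*(2*k)) by (rewrite <- G3; ring).
  subst. unfold zdot, zadd, zmul; cbn [fst snd w0 w1 w2 w3]. split.
  - eexists.
    instantiate (1 := (c0*q0 + d0*r0 + c1*q1 + d1*r1 + c2*q2 + d2*r2 + c3*q3 + d3*r3)
       + k*(q0*q0 + r0*r0 + q1*q1 + r1*r1 + q2*q2 + r2*r2 + q3*q3 + r3*r3)). ring.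
  - eexists.
    instantiate (1 := (c0*r0 + d0*q0 + d0*r0 + c1*r1 + d1*q1 + d1*r1 + c2*r2 + d2*q2 + d2*r2 + c3*r3 + d3*q3 + d3*r3)
       + k*(2*q0*r0 + r0*r0 + 2*q1*r1 + r1*r1 + 2*q2*r2 + r2*r2 + 2*q3*r3 + r3*r3)). ring.
Qed.

Lemma dvz_exact m p : m <> 0 -> dvz m p = true -> p = zsc m (fst p / m, snd p / m).
Proof. intros Hm H. apply dvz_spec in H; auto. destruct H as [H1 H2]. destruct p as [a b]; unfold zsc; simpl in *.
  apply Z.mod_divide in H1; auto. apply Z.mod_divide in H2; auto.
  f_equal; apply Z_div_exact_full_2; auto. Qed.

Definition zdivv (m:Z) (V:ZV) : ZV := zmap (fun p => (fst p / m, snd p / m)) V.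
Lemma dvv_exact m V : m <> 0 -> dvv m V = true -> V = zmap (zsc m) (zdivv m V).
Proof. intros Hm H. destruct V as [p0 p1 p2 p3]. unfold dvv in H; simpl in H.
  destruct (dvz m p0) eqn:E0; [|discriminate]. destruct (dvz m p1) eqn:E1; [|discriminate].
  destruct (dvz m p2) eqn:E2; [|discriminate].
  unfold zdivv, zmap; simpl. f_equal; apply dvz_exact; auto. Qed.

Lemma zsc4 p : zsc 4 p = zsc 2 (zsc 2 p).
Proof. destruct p; unfold zsc; cbn [fst snd]; f_equal; ring. Qed.

Lemma red4_exact Y U : red4 Y U = true -> rcomb Y U = zmap (zsc 2) (zmap (zsc 2) (zdivv 4 (rcomb Y U))).
Proof. intros H. unfold red4 in H. rewrite (dvv_exact 4 _ ltac:(lia) H) at 1.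
  set (Q := zdivv 4 _). destruct Q as [q0 q1 q2 q3]. unfold zmap; simpl. rewrite !zsc4. reflexivity. Qed.

Lemma rcomb_pres Y U : dvz 2 (zdot Y U) = true -> rcomb Y U = zmap (zsc 2) (pres Y U).
Proof. intros H. apply dvz_exact in H; [|lia]. unfold rcomb, pres, zhalf.
  remember (zdot Y U) as s eqn:Es. clear Es. destruct s as [s1 s2]. unfold zsc in H; cbv beta iota delta [fst snd] in *.
  assert (E1 : s1 = 2*(s1/2)) by (apply (f_equal fst) in H; exact H). assert (E2 : s2 = 2*(s2/2)) by (apply (f_equal snd) in H; exact H). clear H. set (t1 := s1/2) in *. set (t2 := s2/2) in *. clearbody t1 t2. subst s1 s2.
  destruct Y as [[] [] [] []], U as [[] [] [] []]; unfold zmap2, zmap, zsc, zsub, zmul; cbv beta iota delta [fst snd w0 w1 w2 w3].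
  f_equal; f_equal; ring. Qed.

Lemma half_cong a b : (8 | 2*a - 2*b) -> (4 | a - b).
Proof. intros [k Hk]. exists k. lia. Qed.

Lemma pres_cong Y V U : congv 8 Y V -> dvz 2 (zdot Y U) = true -> dvz 2 (zdot V U) = true ->
   congv 4 (pres Y U) (pres V U).
Proof. intros HC H1 H2.
  pose proof (zdot_cong 8 Y V U U HC (congv_refl 8 U)) as HD.
  apply dvz_exact in H1; [|lia]. apply dvz_exact in H2; [|lia].
  assert (Ht : congz 4 (zhalf (zdot Y U)) (zhalf (zdot V U))).
  { remember (zdot Y U) as s eqn:Es. remember (zdot V U) as s' eqn:Es'. clear Es Es'.
    destruct s as [a b], s' as [c d]. unfold zsc in *.
    assert (E1 : a = 2*(a/2)) by (apply (f_equal fst) in H1; exact H1).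
    assert (E2 : b = 2*(b/2)) by (apply (f_equal snd) in H1; exact H1).
    assert (E3 : c = 2*(c/2)) by (apply (f_equal fst) in H2; exact H2).
    assert (E4 : d = 2*(d/2)) by (apply (f_equal snd) in H2; exact H2).
    unfold congz, zhalf in *; cbv beta iota delta [fst snd] in *. destruct HD as [A B].
    split; apply half_cong; [rewrite <- E1, <- E3 | rewrite <- E2, <- E4]; assumption. }
  apply (congv_weak 8 4) in HC; [|exists 2; reflexivity].
  destruct HC as (A1&A2&A3&A4). unfold pres, zmap2. cbn [w0 w1 w2 w3].
  repeat split; apply congz_sub; auto; apply congz_mul; auto; apply congz_refl. Qed.

Open Scope R_scope.

Lemma F4 {A} (P : A -> Prop) a b c d : P a -> P b -> P c -> P d -> Forall P [a;b;c;d].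
Proof. intros; repeat constructor; auto. Qed.
Lemma F4inv {A} (P : A -> Prop) a b c d : Forall P [a;b;c;d] -> P a /\ P b /\ P c /\ P d.
Proof. intros H. inversion_clear H as [|? ? X0 H1]. inversion_clear H1 as [|? ? X1 H2].
  inversion_clear H2 as [|? ? X2 H3]. inversion_clear H3 as [|? ? X3 H4]. auto. Qed.
Definition inU (x:V4) : Prop := dot x x = 1 /\ Forall in_Rring (coords x).

Lemma galconj_R y z : galconj y z -> in_Rring y.
Proof. intros (a&b&n&H1&H2). exists a, b, n. auto. Qed.
Lemma galconj_R' y z : galconj y z -> in_Rring z.
Proof. intros (a&b&n&H1&H2). exists (a+b)%Z, (-b)%Z, n. rewrite H2, plus_IZR, opp_IZR, tau'_eq. field. apply pow2_nz. Qed.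
Lemma R_galconj y : in_Rring y -> exists z, galconj y z.
Proof. intros (a&b&n&H). exists ((IZR a + IZR b * tau') / 2^n). exists a, b, n. auto. Qed.

Lemma galconj_add y z y' z' : galconj y z -> galconj y' z' -> galconj (y + y') (z + z').
Proof. intros (a&b&n&H1&H2) (a'&b'&n'&H3&H4).
  exists (a * zp n' + a' * zp n)%Z, (b * zp n' + b' * zp n)%Z, (n + n')%nat.
  pose proof (pow2_nz n); pose proof (pow2_nz n').
  rewrite !plus_IZR, !mult_IZR, !zp_IZR, pow_add. subst. split; field; auto. Qed.

Lemma galconj_mul y z y' z' : galconj y z -> galconj y' z' -> galconj (y * y') (z * z').
Proof. intros (a&b&n&H1&H2) (a'&b'&n'&H3&H4).
  exists (a * a' + b * b')%Z, (a * b' + b * a' + b * b')%Z, (n + n')%nat.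
  pose proof (pow2_nz n); pose proof (pow2_nz n').
  rewrite !plus_IZR, !mult_IZR, pow_add. subst. split.
  - transitivity ((IZR a + IZR b * tau) * (IZR a' + IZR b' * tau) / (2^n * 2^n')). field; auto.
    rewrite tau_mul. reflexivity.
  - transitivity ((IZR a + IZR b * tau') * (IZR a' + IZR b' * tau') / (2^n * 2^n')). field; auto.
    rewrite tau'_mul. reflexivity. Qed.

Lemma galconj_IZR k : galconj (IZR k) (IZR k).
Proof. exists k, 0%Z, 0%nat. simpl. split; field. Qed.

Lemma galconj_1 z : galconj 1 z -> z = 1.
Proof. intros (a&b&n&H1&H2). pose proof (pow2_nz n).
  assert (E : ev (a,b) = ev (zp n, 0%Z)).
  { unfold ev; simpl. rewrite zp_IZR.
    assert (E0 : IZR a + IZR b * tau = 1 * 2^n) by (rewrite H1; field; auto). rewrite E0. ring. }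
  apply ev_inj in E. injection E; intros -> ->. rewrite H2, zp_IZR. field. auto. Qed.

Lemma Rring_add y y' : in_Rring y -> in_Rring y' -> in_Rring (y + y').
Proof. intros H H'. destruct (R_galconj _ H), (R_galconj _ H'). eapply galconj_R. apply galconj_add; eauto. Qed.
Lemma Rring_mul y y' : in_Rring y -> in_Rring y' -> in_Rring (y * y').
Proof. intros H H'. destruct (R_galconj _ H), (R_galconj _ H'). eapply galconj_R. apply galconj_mul; eauto. Qed.
Lemma Rring_IZR k : in_Rring (IZR k).
Proof. eapply galconj_R. apply galconj_IZR. Qed.
Lemma Rring_half y : in_Rring y -> in_Rring (y / 2).
Proof. intros (a&b&n&H). exists a, b, (S n). rewrite H. simpl. field. apply pow2_nz. Qed.
Lemma Rring_tau : in_Rring tau.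
Proof. exists 0%Z, 1%Z, 0%nat. simpl. field. Qed.
Lemma Rring_tau' : in_Rring tau'.
Proof. exists 1%Z, (-1)%Z, 0%nat. rewrite tau'_eq. simpl. field. Qed.
Lemma Rring_ev p N : in_Rring (ev p / 2^N).
Proof. exists (fst p), (snd p), N. reflexivity. Qed.
Lemma Rring_opp y : in_Rring y -> in_Rring (- y).
Proof. intros H. replace (- y) with (IZR (-1) * y) by (simpl; ring). apply Rring_mul; auto. apply Rring_IZR. Qed.

Lemma sign_sq s : is_sign s -> s * s = 1.
Proof. intros [->| ->]; ring. Qed.
Lemma Rring_sign s : is_sign s -> in_Rring s.
Proof. intros [->| ->]. apply (Rring_IZR 1). apply (Rring_IZR (-1)). Qed.

Lemma coords_evV Y N : Forall in_Rring (coords (evV Y N)).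
Proof. unfold coords, evV; simpl. apply F4; apply Rring_ev. Qed.

Fixpoint sumsq (l : list R) : R := match l with [] => 0 | x :: l => x * x + sumsq l end.
Lemma sumsq_perm l l' : Permutation l l' -> sumsq l = sumsq l'.
Proof. induction 1; simpl; try lra. Qed.

Lemma perm_U s l : is_sign s -> Permutation l [s;0;0;0] -> inU (vec_of l).
Proof. intros Hs Hp.
  pose proof (Permutation_length Hp) as Hl.
  assert (Hin : forall x, In x l -> in_Rring x).
  { intros x Hx. apply (Permutation_in _ Hp) in Hx. simpl in Hx.
    destruct Hx as [<-|[<-|[<-|[<-|[]]]]]; [apply Rring_sign; auto| | |]; apply (Rring_IZR 0). }
  destruct l as [|a [|b [|c [|d [|e l]]]]]; simpl in Hl; try lia.
  split.
  - pose proof (sumsq_perm _ _ Hp) as E. simpl in E. unfold dot, vec_of; simpl.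
    rewrite (sign_sq s Hs) in E. lra.
  - unfold coords, vec_of; simpl. apply F4; apply Hin; simpl; tauto. Qed.

Lemma nth_perm_c (p : list nat) (b : list R) : nth 0 b 0 = 0 ->
  c0 (permute p b) = nth (nth 0 p 0%nat) b 0 /\ c1 (permute p b) = nth (nth 1 p 0%nat) b 0 /\
  c2 (permute p b) = nth (nth 2 p 0%nat) b 0 /\ c3 (permute p b) = nth (nth 3 p 0%nat) b 0.
Proof. intros H. unfold permute, vec_of; simpl.
  set (g := fun k => nth k b 0). assert (Hg : g 0%nat = 0) by (unfold g; auto).
  assert (K : forall n, nth n (map g p) 0 = g (nth n p 0%nat)).
  { intros n. rewrite <- (map_nth g p 0%nat n). rewrite Hg. reflexivity. }
  rewrite !K. unfold g. auto. Qed.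

Lemma perm_dot p x1 x2 x3 : In p even_perms ->
  dot (permute p [0;x1;x2;x3]) (permute p [0;x1;x2;x3]) = x1*x1 + x2*x2 + x3*x3.
Proof. intros Hp. simpl in Hp.
  destruct Hp as [<-|[<-|[<-|[<-|[<-|[<-|[<-|[<-|[<-|[<-|[<-|[<-|[]]]]]]]]]]]]];
  unfold permute, vec_of, dot; simpl; ring. Qed.

Lemma nth_R (b : list R) : Forall in_Rring b -> forall k, in_Rring (nth k b 0).
Proof. intros H k. revert k; induction H; intros [|k]; simpl; auto; apply (Rring_IZR 0). Qed.

Lemma perm_R p b : nth 0 b 0 = 0 -> Forall in_Rring b -> Forall in_Rring (coords (permute p b)).
Proof. intros H0 H. destruct (nth_perm_c p b H0) as (E0&E1&E2&E3). unfold coords.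
  rewrite E0, E1, E2, E3. apply F4; apply nth_R; auto. Qed.

Lemma tau_sum : tau + tau' = 1.
Proof. rewrite tau'_eq; ring. Qed.

Lemma Delta_U x : in_Delta x -> inU x.
Proof. intros [(s&l&Hs&Hp&->)|[(s0&s1&s2&s3&H0&H1&H2&H3&->)|(p&s1&s2&s3&Hp&H1&H2&H3&->)]].
  - eapply perm_U; eauto.
  - split.
    + unfold dot; simpl. pose proof (sign_sq _ H0); pose proof (sign_sq _ H1);
      pose proof (sign_sq _ H2); pose proof (sign_sq _ H3). nra.
    + unfold coords; simpl. apply F4; apply Rring_half, Rring_sign; auto.
  - split.
    + rewrite perm_dot by auto.
      pose proof (sign_sq _ H1) as Q1; pose proof (sign_sq _ H2) as Q2; pose proof (sign_sq _ H3) as Q3.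
      transitivity (((s1*s1) + (s2*s2)*(tau'*tau') + (s3*s3)*(tau*tau))/4); [field|].
      rewrite Q1, Q2, Q3, tau_sq, tau'_sq. pose proof tau_sum. lra.
    + apply perm_R; auto. apply F4; [apply (Rring_IZR 0)| apply Rring_half, Rring_sign; auto
      | apply Rring_half, Rring_mul; auto using Rring_sign, Rring_tau' | apply Rring_half, Rring_mul; auto using Rring_sign, Rring_tau]. Qed.

Lemma galconj_dot x z : galconj (c0 x) (c0 z) -> galconj (c1 x) (c1 z) -> galconj (c2 x) (c2 z) -> galconj (c3 x) (c3 z) ->
  galconj (dot x x) (dot z z).
Proof. intros. unfold dot. repeat apply galconj_add; apply galconj_mul; auto. Qed.

Lemma Delta'_U z : in_Delta' z -> inU z.
Proof. intros (x&Hx&G0&G1&G2&G3). destruct (Delta_U x Hx) as [Hd _]. split.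
  - apply galconj_1. rewrite <- Hd. apply galconj_dot; auto.
  - unfold coords. apply F4; eapply galconj_R'; eauto. Qed.

Lemma gen_U a : in_gen a -> inU a.
Proof. intros [H|H]; [apply Delta_U|apply Delta'_U]; auto. Qed.

Lemma refl_dot a x : dot a a = 1 -> dot (refl a x) (refl a x) = dot x x.
Proof. intros H. transitivity (dot x x + 4 * (dot x a)^2 * (dot a a - 1)).
  - destruct a, x; unfold refl, vsub, vadd, vscale, dot; simpl. ring.
  - rewrite H. ring. Qed.

Lemma refl_invol a x : dot a a = 1 -> refl a (refl a x) = x.
Proof. intros H. assert (E : dot (refl a x) a = - dot x a).
  { transitivity (dot x a - 2 * dot x a * dot a a). destruct a, x; unfold refl, vsub, vadd, vscale, dot; simpl; ring.
    rewrite H; ring. }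
  unfold refl at 1. rewrite E. destruct a, x; unfold refl, vsub, vadd, vscale; simpl. apply V4eq; simpl; ring. Qed.

Lemma dot_R x y : Forall in_Rring (coords x) -> Forall in_Rring (coords y) -> in_Rring (dot x y).
Proof. intros Hx Hy. unfold coords in *. 
  apply F4inv in Hx. apply F4inv in Hy. destruct Hx as (X0&X1&X2&X3), Hy as (Y0&Y1&Y2&Y3).
  unfold dot. repeat apply Rring_add; apply Rring_mul; auto. Qed.

Lemma refl_U a x : inU a -> inU x -> inU (refl a x).
Proof. intros [Ha Ra] [Hx Rx]. split.
  - rewrite refl_dot; auto.
  - pose proof (dot_R x a Rx Ra) as Hd.
    unfold coords in *.
    apply F4inv in Rx. apply F4inv in Ra. destruct Rx as (X0&X1&X2&X3), Ra as (Y0&Y1&Y2&Y3).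
    unfold refl, vsub, vadd, vscale; simpl.
    apply F4; (apply Rring_add; [auto| apply Rring_mul; [apply (Rring_IZR (-1)) | apply Rring_mul; [apply Rring_mul; [apply (Rring_IZR 2)|auto]|auto]]]). Qed.

Lemma Hinf_U w : in_Hinf w -> forall x, inU x -> inU (w x).
Proof. induction 1; intros x Hx; auto. apply refl_U; auto. apply gen_U; auto. Qed.

Lemma Sigma_U x : in_Sigma x -> inU x.
Proof. intros (w&a&Hw&Ha&->). apply Hinf_U; auto. apply gen_U; auto. Qed.

Lemma Sigma_refl a x : in_gen a -> in_Sigma x -> in_Sigma (refl a x).
Proof. intros Ha (w&b&Hw&Hb&->). exists (fun y => refl a (w y)), b. split; [|split]; auto. constructor; auto. Qed.

Lemma Sigma_refl_inv a x : in_gen a -> in_Sigma (refl a x) -> in_Sigma x.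
Proof. intros Ha H. rewrite <- (refl_invol a x). apply Sigma_refl; auto. apply gen_U; auto. Qed.

Lemma gen_Sigma a : in_gen a -> in_Sigma a.
Proof. intros H. exists (fun y => y), a. split; [constructor|auto]. Qed.

Open Scope R_scope.

Lemma sign_in s : In s signs -> is_sign (IZR s).
Proof. simpl. intros [<-|[<-|[]]]; [left|right]; reflexivity. Qed.

Lemma evV_permZ p b : nth 0 b (0%Z,0%Z) = (0%Z,0%Z) -> evV (permZ p b) 1 = permute p (map (fun q => ev q / 2^1) b).
Proof. intros H. set (f := fun q => ev q / 2^1).
  assert (Hf : f (0%Z,0%Z) = 0) by (unfold f, ev; simpl; field).
  assert (K : forall k, nth k (map f b) 0 = f (nth k b (0%Z,0%Z))).
  { intros k. rewrite <- Hf. apply map_nth. }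
  destruct (nth_perm_c p (map f b)) as (E0&E1&E2&E3). rewrite K, H; auto.
  apply V4eq; [rewrite E0|rewrite E1|rewrite E2|rewrite E3]; rewrite K; reflexivity. Qed.

Lemma galconj_0 : galconj 0 0.
Proof. apply (galconj_IZR 0). Qed.

Lemma cand_gen u : In u cands -> in_gen (evV u 1).
Proof. unfold cands. rewrite !in_app_iff. intros [H|[H|H]].
  - unfold candA in H.
    apply in_flat_map in H; destruct H as (s0&S0&H).
    apply in_flat_map in H; destruct H as (s1&S1&H).
    apply in_flat_map in H; destruct H as (s2&S2&H).
    apply in_map_iff in H; destruct H as (s3&<-&S3).
    left. right. left. exists (IZR s0), (IZR s1), (IZR s2), (IZR s3).
    repeat split; try apply sign_in; auto.
    apply V4eq; unfold evV, ev; simpl; field.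
  - unfold candB in H.
    apply in_flat_map in H; destruct H as (p&P&H).
    apply in_flat_map in H; destruct H as (s1&S1&H).
    apply in_flat_map in H; destruct H as (s2&S2&H).
    apply in_map_iff in H; destruct H as (s3&<-&S3).
    left. right. right. exists p, (IZR s1), (IZR s2), (IZR s3).
    repeat split; try apply sign_in; auto.
    rewrite evV_permZ by reflexivity. f_equal. unfold baseB; simpl. unfold ev; simpl.
    rewrite opp_IZR, tau'_eq. f_equal; [field|f_equal;[field|f_equal;[field|f_equal; field]]].
  - unfold candC in H.
    apply in_flat_map in H; destruct H as (p&P&H).
    apply in_flat_map in H; destruct H as (s1&S1&H).
    apply in_flat_map in H; destruct H as (s2&S2&H).
    apply in_map_iff in H; destruct H as (s3&<-&S3).
    right. set (bx := [0; IZR s1 / 2; IZR s2 * tau' / 2; IZR s3 * tau / 2]).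
    set (bz := [0; IZR s1 / 2; IZR s2 * tau / 2; IZR s3 * tau' / 2]).
    assert (Ez : evV (permZ p (baseC s1 s2 s3)) 1 = permute p bz).
    { rewrite evV_permZ by reflexivity. f_equal. unfold baseC, bz; simpl. unfold ev; simpl.
      rewrite opp_IZR, tau'_eq. f_equal; [field|f_equal;[field|f_equal;[field|f_equal; field]]]. }
    rewrite Ez. exists (permute p bx). split.
    + right. right. exists p, (IZR s1), (IZR s2), (IZR s3). repeat split; try apply sign_in; auto.
    + assert (G : forall k, galconj (nth k bx 0) (nth k bz 0)).
      { intros [|[|[|[|k]]]]; simpl.
        - apply galconj_0.
        - exists s1, 0%Z, 1%nat. split; simpl; field.
        - exists s2, (-s2)%Z, 1%nat. rewrite opp_IZR. split; simpl; rewrite ?tau'_eq; field.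
        - exists 0%Z, s3, 1%nat. split; simpl; field.
        - destruct k; apply galconj_0. }
      destruct (nth_perm_c p bx eq_refl) as (A0&A1&A2&A3).
      destruct (nth_perm_c p bz eq_refl) as (B0&B1&B2&B3).
      rewrite A0, A1, A2, A3, B0, B1, B2, B3. repeat split; apply G. Qed.

Lemma zveqb_eq U V : zveqb U V = true -> U = V.
Proof. destruct U as [[] [] [] []], V as [[] [] [] []]; unfold zveqb; simpl.
  intros H. repeat rewrite andb_true_iff in H. rewrite !Z.eqb_eq in H. intuition; subst; reflexivity. Qed.

Lemma candRP_in u : In u candR \/ In u candP -> In u cands.
Proof. intros H. pose proof candRP_ok as K. rewrite forallb_forall in K.
  specialize (K u ltac:(apply in_app_iff; auto)). apply existsb_exists in K.
  destruct K as (v&Hv&E). apply zveqb_eq in E. subst; auto. Qed.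

Open Scope R_scope.

Lemma good_step M W :
  (forall Q, dot (evV Q M) (evV Q M) = 1 -> in_Sigma (evV Q M)) ->
  dot (evV W (S M)) (evV W (S M)) = 1 -> good4 W = true -> in_Sigma (evV W (S M)).
Proof. intros IH Hd Hg. unfold good4 in Hg. destruct (evenv W) eqn:Ev.
  - unfold evenv in Ev. apply dvv_exact in Ev; [|lia]. rewrite Ev, evV_half in *. apply IH; auto.
  - apply exb_spec in Hg. destruct Hg as (U&HU&HR).
    assert (Hg : in_gen (evV U 1)) by (apply cand_gen, candRP_in; auto).
    apply (Sigma_refl_inv (evV U 1)); auto.
    rewrite refl_ev, (red4_exact W U HR), !evV_half. apply IH.
    rewrite <- evV_half, <- evV_half, <- red4_exact, <- refl_ev by auto.
    rewrite refl_dot; auto. apply gen_U; auto. Qed.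

Lemma zp_S M : zp (S M) = (2 * zp M)%Z.
Proof. reflexivity. Qed.

Lemma norm8_of Y M : zdot Y Y = (zp (S M) * zp (S M), 0)%Z -> norm8 (zmodv 4 Y) = true.
Proof. intros HZ. pose proof (zmodv_cong 4 Y ltac:(lia)) as HC.
  pose proof (dot_sq_cong 2 Y (zmodv 4 Y) HC) as [A B].
  unfold norm8. remember (zdot (zmodv 4 Y) (zmodv 4 Y)) as n. rewrite HZ in A, B. change (fst (?x, ?y)) with x in A; change (snd (?x, ?y)) with y in B.
  rewrite zp_S in A. destruct A as [k Hk]. destruct B as [k' Hk'].
  assert (E1 : (fst n mod 4 = 0)%Z) by (Z.div_mod_to_equations; nia).
  assert (E2 : (snd n mod 8 = 0)%Z) by (Z.div_mod_to_equations; nia).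
  rewrite E1, E2. reflexivity. Qed.

Lemma norm16_of Y M : zdot Y Y = (zp (S M) * zp (S M), 0)%Z -> norm16 (zmodv 8 Y) = true.
Proof. intros HZ. pose proof (zmodv_cong 8 Y ltac:(lia)) as HC.
  pose proof (dot_sq_cong 4 Y (zmodv 8 Y) HC) as [A B].
  unfold norm16. remember (zdot (zmodv 8 Y) (zmodv 8 Y)) as n. rewrite HZ in A, B. change (fst (?x, ?y)) with x in A; change (snd (?x, ?y)) with y in B.
  destruct B as [k' Hk'].
  assert (E2 : (snd n mod 16 = 0)%Z) by (Z.div_mod_to_equations; nia). rewrite E2.
  destruct A as [k Hk]. destruct M as [|M].
  - change (zp 1 * zp 1)%Z with 4%Z in Hk. assert (E1 : (fst n mod 16 = 4)%Z) by (Z.div_mod_to_equations; nia). rewrite E1. reflexivity.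
  - rewrite !zp_S in Hk. assert (E1 : (fst n mod 16 = 0)%Z) by (Z.div_mod_to_equations; nia). rewrite E1. reflexivity. Qed.

Definition liftL (Y:ZV) : ZV := zmap (fun p => ((fst p mod 8) / 4, (snd p mod 8) / 4)%Z) Y.
Lemma lift_eq Y : lift (zmodv 4 Y) (liftL Y) = zmodv 8 Y.
Proof. destruct Y as [[] [] [] []]. unfold lift, liftL, zmodv, zmap, zmap2, zadd, zsc; cbv beta iota delta [fst snd w0 w1 w2 w3].
  f_equal; f_equal; Z.div_mod_to_equations; lia. Qed.

Lemma base_case Y : dot (evV Y 0) (evV Y 0) = 1 -> in_Sigma (evV Y 0).
Proof. intros H. apply norm_int in H. simpl in H.
  destruct Y as [[a0 b0] [a1 b1] [a2 b2] [a3 b3]]. unfold zdot, zadd, zmul in H; simpl in H.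
  injection H; intros H2 H1; clear H.
  assert (b0 = 0%Z) by nia. assert (b1 = 0%Z) by nia. assert (b2 = 0%Z) by nia. assert (b3 = 0%Z) by nia. subst.
  apply gen_Sigma. left. left.
  assert (Ev : forall a, ev (a, 0%Z) / 2^0 = IZR a) by (intros; unfold ev; simpl; field).
  unfold evV; simpl w0; simpl w1; simpl w2; simpl w3. rewrite !Ev.
  assert (Hs : forall a, (a*a = 1)%Z -> is_sign (IZR a)).
  { intros a Ha. assert (a = 1 \/ a = -1)%Z as [->| ->] by nia; [left|right]; reflexivity. }
  destruct (Z.eq_dec a0 0) as [->|n0].
  - destruct (Z.eq_dec a1 0) as [->|n1].
    + destruct (Z.eq_dec a2 0) as [->|n2].
      * assert (a3*a3 = 1)%Z by nia.
        exists (IZR a3), [0;0;0;IZR a3]. split; [auto|split; [|reflexivity]].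
        apply Permutation_sym, (Permutation_middle [0;0;0] [] (IZR a3)).
      * assert (a2*a2 = 1 /\ a3 = 0)%Z as [? ->] by nia.
        exists (IZR a2), [0;0;IZR a2;0]. split; [auto|split; [|reflexivity]].
        apply Permutation_sym, (Permutation_middle [0;0] [0] (IZR a2)).
    + assert (a1*a1 = 1 /\ a2 = 0 /\ a3 = 0)%Z as [? [-> ->]] by nia.
      exists (IZR a1), [0;IZR a1;0;0]. split; [auto|split; [|reflexivity]].
      apply Permutation_sym, (Permutation_middle [0] [0;0] (IZR a1)).
  - assert (a0*a0 = 1 /\ a1 = 0 /\ a2 = 0 /\ a3 = 0)%Z as [? [-> [-> ->]]] by nia.
    exists (IZR a0), [IZR a0;0;0;0]. split; [auto|split; [|reflexivity]]. apply Permutation_refl. Qed.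

Lemma descent : forall N Y, dot (evV Y N) (evV Y N) = 1 -> in_Sigma (evV Y N).
Proof. induction N as [N IH] using lt_wf_ind. intros Y H.
  destruct N as [|M]; [apply base_case; auto|].
  assert (IHM : forall Q, dot (evV Q M) (evV Q M) = 1 -> in_Sigma (evV Q M)) by (intros; apply IH; auto).
  pose proof (norm_int _ _ H) as HZ.
  set (Yc := zmodv 4 Y).
  assert (HC : congv 4 Y Yc) by (apply zmodv_cong; lia).
  assert (Hchk : chk1 Yc = true).
  { apply (allv_spec _ _ Yc chk1_ok); destruct Y as [[] [] [] []]; unfold Yc, zmodv, zmap; simpl;
    apply in_l4; apply Z.mod_pos_bound; lia. }
  destruct (good4 Y) eqn:Eg. { apply good_step; auto. }
  rewrite (good4_cong Y Yc HC) in Eg. unfold good4 in Eg.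
  unfold chk1 in Hchk. destruct (evenv Yc); [discriminate|].
  assert (N8 : norm8 Yc = true) by (apply norm8_of with M; auto). rewrite N8 in Hchk. destruct (exb (red4 Yc) candR); [discriminate|].
  set (Z8 := zmodv 8 Y).
  assert (H8 : congv 8 Y Z8) by (apply zmodv_cong; lia).
  assert (Hz := allv_spec _ _ (liftL Y) Hchk). cbv beta in Hz. assert (LE : lift Yc (liftL Y) = Z8) by apply lift_eq. rewrite LE in Hz.
  assert (N16 : norm16 Z8 = true) by (apply norm16_of with M; auto). rewrite N16 in Hz.
  assert (Hs : step2 Z8 = true).
  { apply Hz; destruct Y as [[] [] [] []]; unfold liftL, zmap; simpl; apply in_l2; Z.div_mod_to_equations; lia. }
  unfold step2 in Hs. apply exb_spec in Hs. destruct Hs as (U&HU&HS).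
  destruct (dvz 2 (zdot Z8 U)) eqn:D8; [|discriminate].
  assert (DY : dvz 2 (zdot Y U) = true).
  { rewrite <- D8. apply dvz_cong; [lia|]. apply (congz_weak 8); [exists 4%Z; reflexivity|].
    apply zdot_cong; auto. apply congv_refl. }
  assert (Hg : in_gen (evV U 1)) by (apply cand_gen, candRP_in; auto).
  set (W := pres Y U).
  assert (Ew : refl (evV U 1) (evV Y (S M)) = evV W (S M)).
  { rewrite refl_ev, rcomb_pres by auto. apply evV_half. }
  apply (Sigma_refl_inv (evV U 1)); auto. rewrite Ew. apply good_step; auto.
  - rewrite <- Ew, refl_dot; auto. apply gen_U; auto.
  - rewrite (good4_cong W (pres Z8 U)). rewrite <- HS. apply good4_cong. apply zmodv_cong; lia.
    apply pres_cong; auto. Qed.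

Open Scope R_scope.

Lemma rescale a b n k : (IZR a + IZR b * tau) / 2^n = ev (zsc (zp k) (a,b)) / 2^(n+k).
Proof. rewrite ev_sc, zp_IZR, pow_add. unfold ev; simpl. field. split; apply pow2_nz. Qed.

Lemma common_denom x : Forall in_Rring (coords x) -> exists Y N, x = evV Y N.
Proof. intros H. unfold coords in H. apply F4inv in H.
  destruct H as ((a0&b0&n0&E0)&(a1&b1&n1&E1)&(a2&b2&n2&E2)&(a3&b3&n3&E3)).
  set (N := (n0+n1+n2+n3)%nat).
  exists (mkZ (zsc (zp (N-n0)) (a0,b0)) (zsc (zp (N-n1)) (a1,b1)) (zsc (zp (N-n2)) (a2,b2)) (zsc (zp (N-n3)) (a3,b3))), N.
  destruct x; simpl in *. unfold evV; simpl. apply V4eq; simpl.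
  - rewrite E0, (rescale _ _ _ (N-n0)). f_equal. f_equal. unfold N; lia.
  - rewrite E1, (rescale _ _ _ (N-n1)). f_equal. f_equal. unfold N; lia.
  - rewrite E2, (rescale _ _ _ (N-n2)). f_equal. f_equal. unfold N; lia.
  - rewrite E3, (rescale _ _ _ (N-n3)). f_equal. f_equal. unfold N; lia. Qed.

Lemma base_S0 Y : dot (evV Y 0) (evV Y 0) = 1 -> in_S0 (evV Y 0).
Proof. intros H. pose proof (base_case Y H) as Hs. apply norm_int in H. simpl in H.
  destruct Y as [[a0 b0] [a1 b1] [a2 b2] [a3 b3]]. unfold zdot, zadd, zmul in H; simpl in H.
  injection H; intros H2 H1; clear H.
  assert (b0 = 0%Z) by nia. assert (b1 = 0%Z) by nia. assert (b2 = 0%Z) by nia. assert (b3 = 0%Z) by nia. subst.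
  assert (Ev : forall a, ev (a, 0%Z) / 2^0 = IZR a) by (intros; unfold ev; simpl; field).
  unfold evV; simpl w0; simpl w1; simpl w2; simpl w3. rewrite !Ev.
  assert (Hs' : forall a, (a*a = 1)%Z -> is_sign (IZR a)).
  { intros a Ha. assert (a = 1 \/ a = -1)%Z as [->| ->] by nia; [left|right]; reflexivity. }
  destruct (Z.eq_dec a0 0) as [->|n0].
  - destruct (Z.eq_dec a1 0) as [->|n1].
    + destruct (Z.eq_dec a2 0) as [->|n2].
      * assert (a3*a3 = 1)%Z by nia.
        exists (IZR a3), [0;0;0;IZR a3]. split; [auto|split; [|reflexivity]].
        apply Permutation_sym, (Permutation_middle [0;0;0] [] (IZR a3)).
      * assert (a2*a2 = 1 /\ a3 = 0)%Z as [? ->] by nia.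
        exists (IZR a2), [0;0;IZR a2;0]. split; [auto|split; [|reflexivity]].
        apply Permutation_sym, (Permutation_middle [0;0] [0] (IZR a2)).
    + assert (a1*a1 = 1 /\ a2 = 0 /\ a3 = 0)%Z as [? [-> ->]] by nia.
      exists (IZR a1), [0;IZR a1;0;0]. split; [auto|split; [|reflexivity]].
      apply Permutation_sym, (Permutation_middle [0] [0;0] (IZR a1)).
  - assert (a0*a0 = 1 /\ a1 = 0 /\ a2 = 0 /\ a3 = 0)%Z as [? [-> [-> ->]]] by nia.
    exists (IZR a0), [IZR a0;0;0;0]. split; [auto|split; [|reflexivity]]. apply Permutation_refl. Qed.

Lemma Sn_U v n x : in_Sn_gen v n x -> inU x.
Proof. destruct n as [|k]; simpl.
  - intros (s&l&Hs&Hp&->). eapply perm_U; eauto.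
  - intros (Hz&Hd&_&_). split; auto. unfold in_Ztau4, coords in Hz. apply F4inv in Hz.
    destruct x; simpl in *. pose proof (pow2_nz (S k)) as Hn. simpl in Hn.
    destruct Hz as ((a0&b0&E0)&(a1&b1&E1)&(a2&b2&E2)&(a3&b3&E3)). unfold coords; simpl.
    apply F4.
    + exists a0, b0, (S k). rewrite <- E0. pose proof (pow2_nz k). simpl. field. auto.
    + exists a1, b1, (S k). rewrite <- E1. pose proof (pow2_nz k). simpl. field. auto.
    + exists a2, b2, (S k). rewrite <- E2. pose proof (pow2_nz k). simpl. field. auto.
    + exists a3, b3, (S k). rewrite <- E3. pose proof (pow2_nz k). simpl. field. auto. Qed.

Lemma red_zero_ev p : dvz 2 p = true -> red_zero (ev p / 2^0).
Proof. intros H. apply dvz_exact in H; [|lia]. rewrite H, ev_sc. exists (fst p / 2)%Z, (snd p / 2)%Z.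
  unfold ev; simpl. field. Qed.

Lemma red_zero_inv p : red_zero (ev p / 2^0) -> dvz 2 p = true.
Proof. intros (c&d&E). assert (E' : ev p = ev (zsc 2 (c,d))) by (rewrite ev_sc; unfold ev in *; simpl in *; lra).
  apply ev_inj in E'. rewrite E'. unfold dvz, zsc; cbv beta iota delta [fst snd]. rewrite !(Z.mul_comm 2), !Z_mod_mult. reflexivity. Qed.

Lemma scale_evV n Y : vscale (2^n) (evV Y n) = evV Y 0.
Proof. unfold vscale, evV; apply V4eq; simpl; field; apply pow2_nz. Qed.

Lemma evV_wA : evV wA 0 = vA.
Proof. unfold evV, wA, vA, ev; apply V4eq; simpl; rewrite ?tau'_eq; field. Qed.
Lemma evV_wA' : evV wA' 0 = vA'.
Proof. unfold evV, wA', vA', ev; apply V4eq; simpl; rewrite ?tau'_eq; field. Qed.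
Lemma ones_ev : ones = evV (mkZ (1%Z,0%Z) (1%Z,0%Z) (1%Z,0%Z) (1%Z,0%Z)) 0.
Proof. unfold evV, ones, ev; apply V4eq; simpl; field. Qed.

Lemma span_eq Y k1 k2 w : vsub (evV Y 0) (vadd (vscale (ev k1) ones) (vscale (ev k2) (evV w 0))) =
   evV (zmap2 (fun y w => zsub (zsub y k1) (zmul k2 w)) Y w) 0.
Proof. unfold vsub, vadd, vscale, evV, ones, zmap2; apply V4eq; simpl; rewrite !ev_sub, !ev_mul; field. Qed.

Lemma evenv_spec Y : evenv Y = true <-> dvz 2 (w0 Y) = true /\ dvz 2 (w1 Y) = true /\ dvz 2 (w2 Y) = true /\ dvz 2 (w3 Y) = true.
Proof. unfold evenv, dvv. destruct (dvz 2 (w0 Y)), (dvz 2 (w1 Y)), (dvz 2 (w2 Y)), (dvz 2 (w3 Y)); intuition; discriminate. Qed.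

Lemma minimize : forall N Y, dot (evV Y N) (evV Y N) = 1 -> exists n, in_Sn n (evV Y N) \/ in_Sn' n (evV Y N).
Proof. induction N as [N IH] using lt_wf_ind. intros Y H.
  destruct N as [|M]. { exists 0%nat. left. apply base_S0; auto. }
  destruct (evenv Y) eqn:Ev.
  { unfold evenv in Ev. apply dvv_exact in Ev; [|lia]. rewrite Ev, evV_half in *. apply IH; auto. }
  pose proof (norm_int _ _ H) as HZ.
  set (P := zmodv 2 Y).
  assert (HC : congv 2 Y P) by (apply zmodv_cong; lia).
  assert (Hchk : chk2 P = true).
  { apply (allv_spec _ _ P chk2_ok); destruct Y as [[] [] [] []]; unfold P, zmodv, zmap; simpl;
    apply in_l2; apply Z.mod_pos_bound; lia. }
  unfold chk2 in Hchk. rewrite <- (evenv_cong Y P HC), Ev in Hchk.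
  assert (N4 : norm4 P = true).
  { pose proof (dot_sq_cong 1 Y P HC) as [A B]. unfold norm4.
    remember (zdot P P) as n. rewrite HZ in A, B. change (fst (?x, ?y)) with x in A; change (snd (?x, ?y)) with y in B.
    rewrite zp_S in A. destruct A as [k Hk]. destruct B as [k' Hk'].
    assert (E1 : (fst n mod 4 = 0)%Z) by (Z.div_mod_to_equations; nia).
    assert (E2 : (snd n mod 4 = 0)%Z) by (Z.div_mod_to_equations; nia).
    rewrite E1, E2. reflexivity. }
  rewrite N4 in Hchk. apply exb_spec in Hchk. destruct Hchk as (((k1,k2),b)&_&Hsp).
  set (w := if b then wA else wA').
  set (D := zmap2 (fun y w => zsub (zsub y k1) (zmul k2 w)) Y w).
  assert (HD : evenv D = true).
  { unfold spanok in Hsp. rewrite <- Hsp. apply evenv_cong. unfold D, w.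
    destruct HC as (A0&A1&A2&A3). unfold zmap2; cbn [w0 w1 w2 w3].
    repeat split; apply congz_sub; try apply congz_sub; auto; apply congz_refl. }
  assert (Hgen : in_Sn_gen (evV w 0) (S M) (evV Y (S M))).
  { unfold in_Sn_gen. rewrite scale_evV. split; [|split; [auto|split]].
    - unfold in_Ztau4, evV, coords; simpl. apply F4; do 2 eexists; unfold ev; simpl; unfold Rdiv; rewrite Rinv_1, Rmult_1_r; reflexivity.
    - exists (ev k1), (ev k2). split; [eexists; eexists; reflexivity|split; [eexists; eexists; reflexivity|]].
      rewrite span_eq. fold D. apply evenv_spec in HD. destruct HD as (Q0&Q1&Q2&Q3).
      unfold coords, evV. apply F4; apply red_zero_ev; auto.
    - intros HF. unfold coords, evV in HF. apply F4inv in HF. destruct HF as (R0&R1&R2&R3).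
      apply red_zero_inv in R0, R1, R2, R3. assert (evenv Y = true) by (apply evenv_spec; auto). congruence. }
  exists (S M). unfold w in Hgen. destruct b; [left; unfold in_Sn; rewrite <- evV_wA|right; unfold in_Sn'; rewrite <- evV_wA']; auto. Qed.

Lemma U_Sn x : inU x -> exists n, in_Sn n x \/ in_Sn' n x.
Proof. intros [Hd HR]. destruct (common_denom x HR) as (Y&N&->). apply minimize; auto. Qed.

Lemma U_Sigma x : inU x -> in_Sigma x.
Proof. intros [Hd HR]. destruct (common_denom x HR) as (Y&N&->). apply descent; auto. Qed.

Lemma union_U x : (exists n, in_Sn n x \/ in_Sn' n x) -> inU x.
Proof. intros (n&[H|H]); eapply Sn_U; eauto. Qed.

Theorem mainTheorem6 :
  (forall x : V4, in_Sigma x <-> exists n : nat, in_Sn n x \/ in_Sn' n x) /\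
  (forall x : V4, (exists n : nat, in_Sn n x \/ in_Sn' n x) <->
                  (dot x x = 1 /\ Forall in_Rring (coords x))).
Proof. split; intros x; split; intros H.
  - apply U_Sn, Sigma_U; auto.
  - apply U_Sigma, union_U; auto.
  - apply union_U; auto.
  - apply U_Sn; auto. Qed.
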